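(* Let $q$ be a prime power, $n\ge 4$, $0\le h\le q^2-2$ and $(x,y)\in S_{\alpha^h}$. Then $$\left|\{z\in\Phi(n,q):(x,z)\in T,\ (z,y)\in T\}\right| = q^2\,|\Phi(n-2,q)|.$$ In particular (taking $h=0$) the valency of $T$ is $q^2|\Phi(n-2,q)|$.
   Context: Let $V=\mathbb{F}_{q^2}^m$ with Hermitian form $\langle x,y\rangle=\sum_k x_k y_k^{\,q}$ and $\Phi(m,q)=\{x\in\mathbb{F}_{q^2}^m\setminus\{0\}:\langle x,x\rangle=0\}$. Fix a primitive element $\alpha$ of $\mathbb{F}_{q^2}$. On $\Phi=\Phi(n,q)$ let $S_{\alpha^h}=\{(x,y)\in\Phi\times\Phi:y=\alpha^hx\}$ and $T=\{(x,y)\in\Phi\times\Phi:\langle x,y\rangle=0,\ y\notin\mathrm{Span}\{x\}\}$. *)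

(* Defs.v *)
From HB Require Import structures.
From mathcomp Require Import all_boot all_order all_algebra all_field.
Set Implicit Arguments. Unset Strict Implicit. Unset Printing Implicit Defensive.
Import GRing.Theory.
Local Open Scope ring_scope.

(* Hermitian form on F^m, where F = GF(q^2): <x,y> = sum_k x_k * y_k^q *)
Definition herm (F : finFieldType) (q m : nat) (x y : 'rV[F]_m) : F :=
  \sum_(k < m) x 0 k * (y 0 k) ^+ q.

Definition Phi (F : finFieldType) (q m : nat) : {set 'rV[F]_m} :=
  [set x | (x != 0) && (herm q x x == 0)].

Definition Srel (F : finFieldType) (q n : nat) (alpha : F) (h : nat)
  (x y : 'rV[F]_n) : bool :=
  [&& x \in Phi F q n, y \in Phi F q n & y == alpha ^+ h *: x].

Definition Trel (F : finFieldType) (q n : nat) (x y : 'rV[F]_n) : bool :=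
  [&& x \in Phi F q n, y \in Phi F q n, herm q x y == 0 & ~~ (y <= x)%MS].

(* Main.v *)
Require Import Defs.
From HB Require Import structures.
From mathcomp Require Import all_boot all_order all_algebra all_field.
From mathcomp Require Import ring zify.
Set Implicit Arguments. Unset Strict Implicit. Unset Printing Implicit Defensive.
Import GRing.Theory.
Local Open Scope ring_scope.

Definition frobH (F : finFieldType) (q : nat) :=
  [/\ (1 < q)%N, #|F| = (q ^ 2)%N & forall a b : F, (a + b) ^+ q = a ^+ q + b ^+ q].

Lemma card_sum (T : finType) (P : pred T) : #|[set x | P x]| = (\sum_x (P x : nat))%N.
Proof. by rewrite -sum1_card big_mkcond; apply: eq_bigr => x _; rewrite inE; case: (P x). Qed.

Lemma card_roots_lt (F : fieldType) (T : finType) (f : T -> F) (p : {poly F}) :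
  injective f -> p != 0 -> (#|[set s | root p (f s)]| < size p)%N.
Proof.
move=> fi p0; rewrite cardE -(size_map f); apply: max_poly_roots => //.
  by apply/allP => s /mapP [t]; rewrite mem_enum inE => ? ->.
by rewrite map_inj_uniq ?enum_uniq.
Qed.

Section S.
Variables (F : finFieldType) (q : nat).
Hypothesis H : frobH F q.

Lemma q_gt1 : (1 < q)%N. Proof. by case: H. Qed.
Lemma cardF : #|F| = (q ^ 2)%N. Proof. by case: H. Qed.
Lemma frobD (a b : F) : (a + b) ^+ q = a ^+ q + b ^+ q. Proof. by case: H. Qed.

Lemma frob_inv (a : F) : a ^+ q ^+ q = a.
Proof. by rewrite -exprM mulnn -cardF expf_card. Qed.

Lemma frob0 : (0 : F) ^+ q = 0.
Proof. by rewrite expr0n; case: q q_gt1. Qed.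

Lemma frobN (a : F) : (- a) ^+ q = - a ^+ q.
Proof.
have : (- a + a) ^+ q = 0 by rewrite addNr frob0.
by rewrite frobD => /eqP; rewrite addr_eq0 => /eqP.
Qed.

Lemma frob_sum I (r : seq I) (P : pred I) (G : I -> F) :
  (\sum_(i <- r | P i) G i) ^+ q = \sum_(i <- r | P i) G i ^+ q.
Proof. by apply: (big_morph (fun x => x ^+ q)) => //; [exact: frobD | rewrite frob0]. Qed.

Lemma frob_eq0 (a : F) : (a ^+ q == 0) = (a == 0).
Proof. by rewrite expf_eq0; case: q q_gt1. Qed.

Lemma frob_inj : injective (fun a : F => a ^+ q).
Proof. by move=> a b E; rewrite -(frob_inv a) -(frob_inv b) /= E. Qed.

Section Herm.
Variable n : nat.
Implicit Types x y z : 'rV[F]_n.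

Lemma hermDl x y z : herm q (x + y) z = herm q x z + herm q y z.
Proof. by rewrite /herm -big_split; apply: eq_bigr => k _; rewrite mxE mulrDl. Qed.
Lemma hermDr x y z : herm q z (x + y) = herm q z x + herm q z y.
Proof. by rewrite /herm -big_split; apply: eq_bigr => k _; rewrite mxE frobD mulrDr. Qed.
Lemma hermZl c x y : herm q (c *: x) y = c * herm q x y.
Proof. by rewrite /herm mulr_sumr; apply: eq_bigr => k _; rewrite mxE mulrA. Qed.
Lemma hermZr c x y : herm q x (c *: y) = c ^+ q * herm q x y.
Proof. by rewrite /herm mulr_sumr; apply: eq_bigr => k _; rewrite mxE exprMn mulrCA. Qed.
Lemma hermC x y : herm q y x = herm q x y ^+ q.
Proof. by rewrite /herm frob_sum; apply: eq_bigr => k _; rewrite exprMn frob_inv mulrC. Qed.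
Lemma hermNl x y : herm q (- x) y = - herm q x y.
Proof. by rewrite -scaleN1r hermZl mulN1r. Qed.
Lemma hermNr x y : herm q x (- y) = - herm q x y.
Proof. by rewrite -scaleN1r hermZr frobN expr1n mulN1r. Qed.
Lemma herm0l y : herm q 0 y = 0.
Proof. by rewrite -(scale0r 0) hermZl mul0r. Qed.
Lemma herm0r y : herm q y 0 = 0.
Proof. by rewrite -(scale0r 0) hermZr frob0 mul0r. Qed.
Lemma herm_fix x : herm q x x ^+ q = herm q x x.
Proof. by rewrite -hermC. Qed.
End Herm.

Lemma trace_fiber_le (d : F) : (#|[set s : F | (s + s ^+ q == d)%R]| <= q)%N.
Proof.
have hq := q_gt1.
have sz : size ('X^q + ('X - d%:P) : {poly F}) = q.+1.
  by rewrite size_polyDl ?size_polyXn // size_XsubC.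
have := @card_roots_lt F F id ('X^q + ('X - d%:P)) (@inj_id F); rewrite sz ltnS -size_poly_eq0 sz.
move=> /(_ isT); apply: leq_trans.
apply/subset_leq_card/subsetP => s; rewrite !inE /root hornerD hornerXn hornerD hornerX hornerN hornerC.
by move=> /eqP <-; apply/eqP; ring.
Qed.

Lemma fix_card_le : (#|[set s : F | (s ^+ q == s)%R]| <= q)%N.
Proof.
have hq := q_gt1.
have sz : size ('X^q + (- 'X) : {poly F}) = q.+1.
  by rewrite size_polyDl ?size_polyXn // size_polyN size_polyX.
have := @card_roots_lt F F id ('X^q + (- 'X)) (@inj_id F); rewrite sz ltnS -size_poly_eq0 sz.
move=> /(_ isT); apply: leq_trans.
apply/subset_leq_card/subsetP => s; rewrite !inE /root !hornerE.
by rewrite subr_eq0.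
Qed.

Lemma trace_fiber (d : F) : d ^+ q = d -> #|[set s : F | s + s ^+ q == d]| = q.
Proof.
move=> dfix.
pose tau e := #|[set s : F | s + s ^+ q == e]|.
pose Fx := [set s : F | s ^+ q == s].
have all1 : (\sum_e tau e = q * q)%N.
  rewrite /tau; under eq_bigr do rewrite card_sum.
  rewrite exchange_big /= mulnn -cardF -sum1_card.
  apply: eq_bigr => s _; rewrite (bigD1 (s + s ^+ q)) //= eqxx big1 //.
  by move=> e /negbTE; rewrite eq_sym => ->.
have tot : (\sum_(e in Fx) tau e = q * q)%N.
  rewrite -all1 [RHS](bigID (mem Fx)) /= [X in (_ + X)%N]big1 ?addn0 //.
  move=> e eF; apply/eqP; rewrite cards_eq0; apply/eqP/setP => s; rewrite !inE.
  apply/negbTE; apply: contra eF => /eqP <-; rewrite inE frobD frob_inv addrC.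
  by [].
have dF : d \in Fx by rewrite inE dfix.
rewrite (bigD1 d) //= in tot.
have R : (\sum_(e in Fx | e != d) tau e <= #|[pred e in Fx | e != d]| * q)%N.
  apply: leq_trans; first by apply: leq_sum => e _; exact: trace_fiber_le.
  rewrite sum_nat_const.
  by [].
have C : #|Fx| = (#|[pred e in Fx | e != d]|).+1.
  rewrite (cardD1 d) dF add1n; congr _.+1; apply: eq_card => e; by rewrite !inE andbC.
have Fq := fix_card_le.
have td : (tau d <= q)%N := trace_fiber_le d.
rewrite -/Fx C in Fq.
have cq : (#|[pred e in Fx | e != d]| * q <= q.-1 * q)%N by rewrite leq_mul2r -ltnS prednK ?Fq ?orbT //; case: q q_gt1.
rewrite -/(tau d); move: (tau d) td tot R cq => t; move: (\sum_(e in Fx | e != d) tau e) => S; move: (#|_| * q)%N => cc.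
have hq := q_gt1; nia.
Qed.
Lemma frob_mulK (b : F) : b != 0 -> b * (b ^+ q) ^-1 ^+ q = 1.
Proof. by move=> b0; rewrite exprVn frob_inv divff. Qed.

Lemma countG (c r : F) : c ^+ q = c -> r ^+ q = r ->
  (\sum_(a : F) \sum_(b : F) ((c + (a * b ^+ q + b * a ^+ q + b * b ^+ q * r) == 0)%R : nat)
   = q ^ 2 * (c == 0)%R + (q ^ 2 - 1) * q)%N.
Proof.
move=> cf rf; rewrite exchange_big (bigD1 (0 : F)) //=.
have -> : (\sum_(a : F) ((c + (a * 0 ^+ q + 0 * a ^+ q + 0 * 0 ^+ q * r) == 0)%R : nat)
          = q ^ 2 * (c == 0)%R)%N.
  rewrite frob0; under eq_bigr do rewrite !(mulr0, mul0r, addr0).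
  by rewrite sum_nat_const cardF.
congr (_ + _)%N.
rewrite (eq_bigr (fun _ => q)); first by rewrite sum_nat_const cardC1 cardF subn1.
move=> b b0.
have bq0 : b ^+ q != 0 by rewrite frob_eq0.
rewrite (reindex (fun s => s * (b ^+ q)^-1)) /=; last first.
  exists (fun a => a * b ^+ q); [move=> s _ /=; exact: divfK | move=> s _ /=; exact: mulfK].
have E : forall s, ((c + (s * (b ^+ q)^-1 * b ^+ q + b * (s * (b ^+ q)^-1) ^+ q
     + b * b ^+ q * r) == 0)%R : nat) = ((s + s ^+ q == - (c + b * b ^+ q * r))%R : nat).
  move=> s; rewrite divfK // exprMn mulrCA frob_mulK // mulr1.
  by rewrite -addr_eq0; congr (_ == 0); ring.
under eq_bigr do rewrite E.
rewrite -card_sum trace_fiber //.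
by rewrite frobN frobD !exprMn frob_inv cf rf [b ^+ q * b]mulrC.
Qed.
Definition Nc n := (\sum_(v : 'rV[F]_n) ((herm q v v == 0)%R : nat))%N.
Definition Bc n (x : 'rV[F]_n) :=
  (\sum_(v : 'rV[F]_n) (((herm q v v == 0) && (herm q v x == 0))%R : nat))%N.

Section Decomp.
Variable n : nat.
Variables x u : 'rV[F]_n.
Hypothesis hxx : herm q x x = 0.
Hypothesis hux : herm q u x = 1.

Let r := herm q u u.
Let W := [set w : 'rV[F]_n | (herm q w x == 0) && (herm q w u == 0)].
Let g (t : 'rV[F]_n * (F * F)) := t.1 + t.2.1 *: x + t.2.2 *: u.

Lemma hxu : herm q x u = 1.
Proof. by rewrite hermC hux expr1n. Qed.

Lemma herm_gx t : t.1 \in W -> herm q (g t) x = t.2.2.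
Proof.
case: t => w [a b]; rewrite inE /g /= => /andP [/eqP wx _].
by rewrite !hermDl !hermZl wx hxx hux; ring.
Qed.

Lemma herm_gu t : t.1 \in W -> herm q (g t) u = t.2.1 + t.2.2 * r.
Proof.
case: t => w [a b]; rewrite inE /g /= => /andP [_ /eqP wu].
by rewrite !hermDl !hermZl wu hxu add0r mulr1.
Qed.

Lemma herm_gg t : t.1 \in W ->
  herm q (g t) (g t) = herm q t.1 t.1 +
     (t.2.1 * t.2.2 ^+ q + t.2.2 * t.2.1 ^+ q + t.2.2 * t.2.2 ^+ q * r).
Proof.
case: t => w [a b]; rewrite inE /g /= => /andP [/eqP wx /eqP wu].
have xw : herm q x w = 0 by rewrite hermC wx frob0.
have uw : herm q u w = 0 by rewrite hermC wu frob0.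
rewrite !hermDl !hermDr !hermZl !hermZr wx wu xw uw hxx hxu hux -/r; ring.
Qed.

Lemma reindexL (f : 'rV[F]_n -> nat) :
  (\sum_v f v = \sum_(w in W) \sum_(a : F) \sum_(b : F) f (g (w, (a, b))))%N.
Proof.
under [RHS]eq_bigr do rewrite pair_big /=.
rewrite pair_big_dep /=.
have inj : {in [pred t : 'rV[F]_n * (F * F) | t.1 \in W] &, injective g}.
  move=> t1 t2 W1 W2 E.
  have eb : t1.2.2 = t2.2.2 by rewrite -herm_gx // -herm_gx // E.
  have ea : t1.2.1 = t2.2.1.
    by apply: (@addIr _ (t1.2.2 * r)); rewrite -herm_gu // E herm_gu // eb.
  move: E eb ea; case: t1 W1 => w1 [a1 b1]; case: t2 W2 => w2 [a2 b2] /= _ _.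
  rewrite /g /= => E eb ea; subst; congr (_, _).
  by move/(congr1 (fun v => v - b2 *: u - a2 *: x)): E; rewrite !addrK.
rewrite (eq_bigr (fun p => f (g p))); last by case=> ? [].
rewrite (eq_bigl [pred t | t.1 \in W]); last by move=> p; rewrite andbT.
rewrite -(big_imset _ inj) /=; apply: eq_bigl => v; symmetry.
apply/imsetP.
pose b := herm q v x; pose a := herm q v u - b * r.
exists (v - a *: x - b *: u, (a, b)).
  rewrite !inE !hermDl !hermNl !hermZl hxx hux hxu -/r /a /b.
  by apply/andP; split; apply/eqP; ring.
rewrite /g /= -(addrA (v - a *: x - b *: u)) (addrC (a *: x)) addrA subrK subrK //.
Qed.
Lemma decompL : exists M Wc : nat,
  [/\ (\sum_(v : 'rV[F]_n) 1 = Wc * q ^ 4)%N,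
      Nc n = (q ^ 2 * M + Wc * ((q ^ 2 - 1) * q))%N, Bc x = (q ^ 2 * M)%N &
      M = (\sum_(w : 'rV[F]_n | ((herm q w x == 0) && (herm q w u == 0))%R)
              ((herm q w w == 0)%R : nat))%N].
Proof.
exists (\sum_(w in W) ((herm q w w == 0)%R : nat))%N, #|W|; split;
  last by apply: eq_bigl => w; rewrite inE.
- rewrite (reindexL (fun _ => 1%N)).
  rewrite (eq_bigr (fun _ => q ^ 4)%N) ?sum_nat_const //.
  by move=> w _; rewrite muln1 cardF -expnD.
- rewrite /Nc reindexL.
  rewrite (eq_bigr (fun w => q ^ 2 * ((herm q w w == 0)%R : nat) + (q ^ 2 - 1) * q)%N).
    by rewrite big_split /= -big_distrr /= sum_nat_const.
  move=> w wW.
  rewrite -(countG (herm_fix w) (herm_fix u)).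
  by apply: eq_bigr => a _; apply: eq_bigr => b _; rewrite herm_gg.
- rewrite /Bc reindexL big_distrr /=; apply: eq_bigr => w wW.
  rewrite -[in RHS]cardF -sum_nat_const; apply: eq_bigr => a _.
  rewrite (bigD1 0) //= big1 ?addn0.
    by rewrite herm_gg // herm_gx //= frob0 !(mulr0, mul0r, addr0) eqxx andbT.
  by move=> b b0; rewrite herm_gx // (negbTE b0) andbF.
Qed.
End Decomp.

Lemma herm_row_mx m1 m2 (a c : 'rV[F]_m1) (b d : 'rV[F]_m2) :
  herm q (row_mx a b) (row_mx c d) = herm q a c + herm q b d.
Proof.
by rewrite /herm big_split_ord /=; congr (_ + _); apply: eq_bigr => i _;
  rewrite ?row_mxEl ?row_mxEr.
Qed.

Lemma sum_row_mx m1 m2 (G : 'rV[F]_(m1 + m2) -> nat) :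
  (\sum_w G w = \sum_(v1 : 'rV[F]_m1) \sum_(v2 : 'rV[F]_m2) G (row_mx v1 v2))%N.
Proof.
rewrite pair_big /= (reindex (fun p : 'rV[F]_m1 * 'rV[F]_m2 => row_mx p.1 p.2)) //.
by exists (fun w => (lsubmx w, rsubmx w)) => [[a b] _|w _] /=;
  rewrite ?row_mxKl ?row_mxKr ?hsubmxK.
Qed.

Definition i1 : 'I_2 := Ordinal (isT : (1 < 2)%N).

Lemma herm2 (a c : 'rV[F]_2) :
  herm q a c = a 0 ord0 * c 0 ord0 ^+ q + a 0 i1 * c 0 i1 ^+ q.
Proof. rewrite /herm !big_ord_recl big_ord0 addr0. by have -> : lift ord0 ord0 = i1 by apply: val_inj. Qed.

Lemma rV2_eq0 (a : 'rV[F]_2) : a 0 ord0 = 0 -> a 0 i1 = 0 -> a = 0.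
Proof.
move=> h0 h1; apply/rowP => i; rewrite mxE.
case: i => [[|[|k]]] hk.
- by rewrite -h0; congr (a 0 _); apply: val_inj.
- by rewrite -h1; congr (a 0 _); apply: val_inj.
- by [].
Qed.

Lemma std_count m (b : F) : b * b ^+ q = -1 ->
  exists x0 u0 : 'rV[F]_(2 + m), [/\ herm q x0 x0 = 0, herm q u0 x0 = 1 &
    (\sum_(w : 'rV[F]_(2 + m) | ((herm q w x0 == 0) && (herm q w u0 == 0))%R)
        ((herm q w w == 0)%R : nat))%N = Nc m].
Proof.
move=> bb.
have b0 : b != 0.
  by apply/eqP => e; move: bb; rewrite e mul0r => /eqP; rewrite eq_sym oppr_eq0 oner_eq0.
pose x0l : 'rV[F]_2 := \row_(i < 2) (if (i == 0 :> nat) then 1 else b).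
pose u0l : 'rV[F]_2 := \row_(i < 2) (if (i == 0 :> nat) then 1 else 0).
exists (row_mx x0l 0), (row_mx u0l 0); split.
- by rewrite herm_row_mx herm0r addr0 herm2 !mxE /= expr1n mulr1 bb subrr.
- by rewrite herm_row_mx herm0r addr0 herm2 !mxE /= expr1n mulr1 mul0r addr0.
rewrite big_mkcond sum_row_mx (bigD1 0) //= [X in (_ + X)%N]big1 ?addn0.
  rewrite /Nc; apply: eq_bigr => v _.
  by rewrite !herm_row_mx !herm0r !herm0l !addr0 !add0r eqxx.
move=> v1 v10; apply: big1 => v2 _.
rewrite !herm_row_mx !herm0r !addr0 !herm2 !mxE /= expr1n frob0 !mulr1 !mulr0 !addr0.
case: ifP => // /andP [/eqP e1 /eqP e0].
rewrite e0 add0r in e1.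
have e2 : v1 0 i1 = 0.
  by move/eqP: e1; rewrite mulf_eq0 frob_eq0 (negbTE b0) orbF => /eqP.
by move: v10; rewrite (rV2_eq0 e0 e2) eqxx.
Qed.

Lemma exists_u n (x : 'rV[F]_n) : x != 0 -> exists u : 'rV[F]_n, herm q u x = 1.
Proof.
move=> x0.
have [i xi] : exists i, x 0 i != 0.
  apply/existsP; apply: contraNT x0 => /existsPn hx; apply/eqP/rowP => i.
  by rewrite mxE; move: (hx i); rewrite negbK => /eqP.
exists (\row_k (if k == i then (x 0 i ^+ q)^-1 else 0)).
rewrite /herm (bigD1 i) //= big1 ?addr0.
  by rewrite mxE eqxx mulVf // frob_eq0.
by move=> k /negbTE ki; rewrite mxE ki mul0r.
Qed.

Lemma Bc_std m (b : F) (x : 'rV[F]_(2 + m)) : b * b ^+ q = -1 ->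
  x != 0 -> herm q x x = 0 -> Bc x = (q ^ 2 * Nc m)%N.
Proof.
move=> bb x0 xx; have [u ux] := exists_u x0.
have [M1 [W1 [s1 N1 B1 _]]] := decompL xx ux.
have [x1 [u1 [hx1 hu1 E]]] := std_count m bb.
have [M0 [W0 [s0 N0 _ EM]]] := decompL hx1 hu1.
have eW : W1 = W0.
  apply/eqP; rewrite -(@eqn_pmul2r (q ^ 4)) ?expn_gt0; last by case: q q_gt1.
  by rewrite -s1 -s0.
rewrite B1 -E -EM; apply/eqP; rewrite -(eqn_add2r (W0 * ((q ^ 2 - 1) * q))).
by rewrite -N0 -eW -N1.
Qed.

Lemma sub_sym n (x z : 'rV[F]_n) : x != 0 -> (x <= z)%MS -> (z <= x)%MS.
Proof.
move=> x0 /sub_rVP [a xa].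
have a0 : a != 0 by apply: contraNneq x0 => a0; rewrite xa a0 scale0r.
by apply/sub_rVP; exists a^-1; rewrite xa scalerA mulVf // scale1r.
Qed.

Lemma Nc_Phi m : Nc m = (#|Phi F q m|).+1.
Proof.
rewrite /Nc -card_sum (cardsD1 0) inE herm0l eqxx add1n; congr _.+1.
by apply: eq_card => v; rewrite !inE.
Qed.

Lemma main_count m (b : F) (x : 'rV[F]_(2 + m)) : b * b ^+ q = -1 ->
  x \in Phi F q (2 + m) ->
  #|[set z in Phi F q (2 + m) | Trel q x z]| = (q ^ 2 * #|Phi F q m|)%N.
Proof.
move=> bb; rewrite inE => /andP [x0 /eqP xx].
have hB := Bc_std bb x0 xx.
pose A := [set z : 'rV[F]_(2 + m) | (herm q z z == 0) && (herm q z x == 0)].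
pose S := [set z : 'rV[F]_(2 + m) | (z <= x)%MS].
have cA : #|A| = Bc x by rewrite card_sum.
have SA : A :&: S = S.
  apply/setIidPr/subsetP => z; rewrite !inE => /sub_rVP [c ->].
  by rewrite !hermZl !hermZr xx !mulr0 eqxx.
have cS : #|S| = (q ^ 2)%N.
  have -> : S = (fun c => c *: x) @: [set: F].
    apply/setP => z; rewrite inE; apply/sub_rVP/imsetP => [[c ->]|[c _ ->]];
      by exists c.
  rewrite card_in_imset ?cardsT ?cardF // => c d _ _ /eqP.
  by rewrite -subr_eq0 -scalerBl scaler_eq0 (negbTE x0) orbF subr_eq0 => /eqP.
have -> : [set z in Phi F q (2 + m) | Trel q x z] = A :\: S.
  apply/setP => z; rewrite !inE /Trel !inE x0 xx eqxx /=.
  have hzx : (herm q x z == 0) = (herm q z x == 0) by rewrite hermC frob_eq0.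
  rewrite hzx; case sz: (z <= x)%MS; rewrite /= ?andbF ?andbT //.
  have -> : z != 0 by apply: contraFneq sz => ->; rewrite sub0mx.
  by case: (herm q z z == 0).
have := cardsID S A; rewrite SA cS cA hB Nc_Phi => e.
by move: e; rewrite mulnS => /addnI.
Qed.

Lemma beta_exists (alpha : F) : (q ^ 2 - 1)%N.-primitive_root alpha ->
  exists b : F, b * b ^+ q = -1.
Proof.
move=> pa.
have hq := q_gt1.
have m1q : (-1 : F) ^+ q = -1 by rewrite frobN expr1n.
have m1q1 : (-1 : F) ^+ q.-1 = 1.
  apply: (@mulIf _ (-1)); first by rewrite oppr_eq0 oner_eq0.
  by rewrite -exprSr prednK ?m1q ?mul1r //; case: q hq.
have m1all : (-1 : F) ^+ (q ^ 2 - 1) = 1.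
  apply: (@mulIf _ (-1)); first by rewrite oppr_eq0 oner_eq0.
  rewrite -exprSr subn1 prednK ?expf_card ?mul1r -?cardF ?expf_card //.
  by rewrite cardF expn_gt0; case: q hq.
have [[i _] /= ei] := prim_rootP pa m1all.
have dv : (q.+1 %| i)%N.
  have : (q ^ 2 - 1 %| i * q.-1)%N.
    by rewrite (prim_order_dvd pa) exprM -ei m1q1.
  have -> : (q ^ 2 - 1 = q.+1 * q.-1)%N.
    by case: q hq => // k _; rewrite /= expnS expn1; nia.
  by rewrite dvdn_pmul2r //; case: q hq.
exists (alpha ^+ (i %/ q.+1)).
by rewrite -exprS -exprM divnK // -ei.
Qed.
End S.

Lemma frobH_of (F : finFieldType) (q : nat) :
  (exists p k : nat, [/\ prime p, (0 < k)%N & q = (p ^ k)%N]) ->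
  #|F| = (q ^ 2)%N -> frobH F q.
Proof.
move=> [p [k [pp k0 ->]]] hc; split => //.
- case: k k0 {hc} => // k _; rewrite expnS.
  have p1 := prime_gt1 pp; have : (0 < p ^ k)%N by rewrite expn_gt0 ltnW.
  nia.
- move=> a b; apply: exprDn_pchar.
  have pc : p \in [pchar F] by apply: (card_finPcharP (n := (k * 2)%N)) => //; rewrite expnM.
  by rewrite (eq_pnat _ (pcharf_eq pc)) pnatX pnat_id.
Qed.

Unset Implicit Arguments.

Theorem lemma3p2 (F : finFieldType) (q n h : nat) (alpha : F)
  (x y : 'rV[F]_n) :
  (exists p k : nat, [/\ prime p, (0 < k)%N & q = (p ^ k)%N]) ->
  #|F| = (q ^ 2)%N ->
  (q ^ 2 - 1)%N.-primitive_root alpha ->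
  (4 <= n)%N ->
  (h <= q ^ 2 - 2)%N ->
  Srel q alpha h x y ->
  #|[set z in Phi F q n | Trel q x z && Trel q z y]| = (q ^ 2 * #|Phi F q (n - 2)|)%N
  /\ (forall x0 : 'rV[F]_n, x0 \in Phi F q n ->
        #|[set z in Phi F q n | Trel q x0 z]| = (q ^ 2 * #|Phi F q (n - 2)|)%N).
Proof.
move=> hp hc pa n4 _ sxy.
have H := frobH_of hp hc.
have [b bb] := beta_exists H pa.
have hq := q_gt1 H.
have a0 : alpha != 0.
  have qp : (q ^ 2 - 1 == 0)%N = false.
    apply/negbTE; rewrite -lt0n subn_gt0; rewrite -mulnn; nia.
  apply/eqP => a0; have := prim_expr_order pa; rewrite a0 expr0n qp.
  by move/eqP; rewrite eq_sym oner_eq0.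
move: n n4 x y sxy => [|[|m]] // _ x y sxy.
have -> : (m.+2 - 2 = m)%N by rewrite subn2.
have mc : forall x0 : 'rV[F]_(2 + m), x0 \in Phi F q (2 + m) ->
    #|[set z in Phi F q (2 + m) | Trel q x0 z]| = (q ^ 2 * #|Phi F q m|)%N.
  by move=> x0; apply: main_count bb.
split; last exact: mc.
move: (sxy) => /and3P [xP yP /eqP ey].
have -> : [set z in Phi F q m.+2 | Trel q x z && Trel q z y] =
          [set z in Phi F q m.+2 | Trel q x z].
  apply/setP => z; rewrite !inE; case tx: (Trel q x z); rewrite ?andbF //= andbT.
  move: tx => /and4P [_ zP /eqP hxz nzx].
  rewrite /Trel zP yP ey hermZr [herm q z x](hermC H) hxz (frob0 H) mulr0 eqxx /=.
  have c0 : alpha ^+ h != 0 by rewrite expf_neq0.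
  have -> : ~~ (alpha ^+ h *: x <= z)%MS.
    rewrite (eqmx_scale _ c0); apply: contra nzx; apply: sub_sym.
    by move: xP; rewrite inE => /andP [].
  by rewrite !andbT.
exact: mc.
Qed.
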